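(* Let $U\subsetneq(0,\pi)$ be an open set. Then for every $\varepsilon>0$ there exists $M=M(\varepsilon)>0$ such that for any $A\in SL_2(\mathbb R)$ satisfying $\varphi_A(U)\subset U$ and $\|A\|>M$, we have $(t_A-\varepsilon,t_A+\varepsilon)\not\subset U$.
   Context: $\mathbb{RP}^1$ is identified with $[0,\pi)\cong\mathbb R/\pi\mathbb Z$ (angle $\theta$ corresponds to the line through $(\cos\theta,\sin\theta)$), and $\varphi_A$ is the induced action of $A$ on it. For $A\in SL_2(\mathbb R)$, $t_A\in[0,\pi)$ is defined by: $(\cos t_A,\sin t_A)^{\mathrm t}$ is a unit eigenvector of $A^*A$ for its eigenvalue $\|A\|^{-2}$. *)

(* Defs.v *)
From HB Require Import structures.
From mathcomp Require Import all_boot all_order all_algebra.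
From mathcomp Require Import all_classical all_reals all_analysis.
Set Implicit Arguments. Unset Strict Implicit. Unset Printing Implicit Defensive.
Import Order.TTheory GRing.Theory Num.Theory.
Local Open Scope classical_set_scope.
Local Open Scope ring_scope.

Section Defs.
Variable R : realType.

Definition vec2 (x y : R) : 'cV[R]_2 := \col_(i < 2) [:: x; y]`_i.

Definition enorm (v : 'cV[R]_2) : R := Num.sqrt (v 0 0 ^+ 2 + v 1 0 ^+ 2).

Definition opnorm (A : 'M[R]_2) : R :=
  sup [set enorm (A *m v) | v in [set v : 'cV[R]_2 | enorm v = 1]].

Definition ang (t : R) : 'cV[R]_2 := vec2 (cos t) (sin t).

(* t in [0,pi) is the angle (point of RP^1 = [0,pi)) of the line spanned by v *)
Definition line_angle (v : 'cV[R]_2) (t : R) : Prop :=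
  0 <= t < pi /\ exists r : R, v = r *: ang t.

(* phi_A(U) is contained in U, phi_A being the induced action on RP^1 *)
Definition maps_into (A : 'M[R]_2) (U : set R) : Prop :=
  forall th, U th -> forall th', line_angle (A *m ang th) th' -> U th'.

Definition is_tA (A : 'M[R]_2) (t : R) : Prop :=
  0 <= t < pi /\ (A^T *m A) *m ang t = (opnorm A ^- 2) *: ang t.

End Defs.

(* Main.v *)
Require Import Defs.
From HB Require Import structures.
From mathcomp Require Import all_boot all_order all_algebra.
From mathcomp Require Import all_classical all_reals all_analysis.
From mathcomp Require Import ring lra.
Import Order.TTheory GRing.Theory Num.Theory.
Import numFieldTopology.Exports.
Local Open Scope classical_set_scope.
Local Open Scope ring_scope.

Lemma det22 (R : realType) (A : 'M[R]_2) : \det A = A 0 0 * A 1 1 - A 0 1 * A 1 0.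
Proof.
rewrite (expand_det_row _ 0) !big_ord_recl big_ord0 /= addr0 /cofactor !det_mx11 !mxE /=.
have e1 : lift 0 (0 : 'I_1) = 1 :> 'I_2 by apply/val_inj.
have e2 : lift (lift 0 (0 : 'I_1)) (0 : 'I_1) = 0 :> 'I_2 by apply/val_inj.
have e3 : lift 0 (0 : 'I_1) = 1 :> 'I_2 by apply/val_inj.
rewrite e2 e1 /=. rewrite expr0 expr1. ring.
Qed.

Lemma mul2E (R : realType) (A : 'M[R]_2) (v : 'cV[R]_2) i :
  (A *m v) i 0 = A i 0 * v 0 0 + A i 1 * v 1 0.
Proof.
rewrite mxE !big_ord_recl big_ord0 /= addr0.
have e1 : lift 0 (0 : 'I_1) = 1 :> 'I_2 by apply/val_inj.
by rewrite e1.
Qed.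

Lemma vec2E (R : realType) x y : (vec2 x y : 'cV[R]_2) 0 0 = x /\ (vec2 x y : 'cV[R]_2) 1 0 = y.
Proof. by rewrite !mxE. Qed.

Lemma cv2_eq (R : realType) (u v : 'cV[R]_2) : u 0 0 = v 0 0 -> u 1 0 = v 1 0 -> u = v.
Proof.
move=> h0 h1; apply/matrixP => i j.
rewrite (ord1 j). case: i => [[|[|i]] Hi].
- by rewrite (_ : Ordinal Hi = 0) //; apply/val_inj.
- by rewrite (_ : Ordinal Hi = 1) //; apply/val_inj.
- by [].
Qed.

Lemma mulE (R : realType) m n (A : 'M[R]_(m,2)) (B : 'M[R]_(2,n)) i j :
  (A *m B) i j = A i 0 * B 0 j + A i 1 * B 1 j.
Proof.
rewrite mxE !big_ord_recl big_ord0 /= addr0.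
have e1 : lift 0 (0 : 'I_1) = 1 :> 'I_2 by apply/val_inj.
by rewrite e1.
Qed.

Lemma sc2 (R : realType) x : cos x ^+ 2 + sin x ^+ 2 = 1 :> R.
Proof. by rewrite sin2cos2; ring. Qed.

Lemma bound_lemma (R : realFieldType) (s l c T K a b : R) :
  0 < c -> 0 < T -> K = 5 / (c^+2 * T^+2) -> 1 + K < s -> l * s^+2 = 1 ->
  a^+2 <= l -> c^+2 * s^+2 <= 5 * b^+2 -> a^+2 < T^+2 * b^+2.
Proof.
move=> c0 T0 HK Hs Hl Ha Hb.
have cT : 0 < c^+2 * T^+2 by rewrite mulr_gt0 // exprn_gt0.
have hK : K * (c^+2 * T^+2) = 5 by rewrite HK divfK // gt_eqF.
have K0 : 0 < K by rewrite HK divr_gt0.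
have s1 : 1 < s by lra.
have s2 : s < s^+2 by rewrite expr2; nra.
have s4 : K < s^+2 * s^+2 by nra.
have h5 : 5 < (c^+2 * T^+2) * (s^+2 * s^+2) by nra.
have sp : 0 < s^+2 by nra.
have h6 : 5 * l < c^+2 * T^+2 * s^+2 by nra.
nra.
Qed.

Lemma atan_bound (R : realType) (e x : R) : 0 < e < pi / 2 -> x ^+ 2 < tan e ^+ 2 ->
  - e < atan x < e.
Proof.
move=> /andP[e0 e1] hx.
have T0 : 0 < tan e.
  rewrite /tan divr_gt0 //; first by apply: sin_gt0_pihalf; rewrite e0 e1.
  by apply: cos_gt0_pihalf; apply/andP; split => //; lra.
have hin : e \in `](- (pi / 2)), (pi / 2)[ by rewrite in_itv /=; apply/andP; split => //; lra.
have xl : x < tan e by nra.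
have xg : - tan e < x by nra.
apply/andP; split.
- rewrite -{1}(tanK hin) -atanN. exact: lt_atan.
- rewrite -{1}(tanK hin). exact: lt_atan.
Qed.

Lemma final_step (R : realType) (U : set R) (A : 'M[R]_2) (t e phi a1 a2 b1 b2 : R) :
  (forall s, (A *m ang (t+s)) 0 0 = cos s * a1 + sin s * b1) ->
  (forall s, (A *m ang (t+s)) 1 0 = cos s * a2 + sin s * b2) ->
  maps_into A U -> ~ U phi -> 0 <= phi < pi ->
  (forall s, -e < s < e -> U (t + s)) ->
  0 < e < pi/2 ->
  cos phi * b2 - sin phi * b1 != 0 ->
  ((cos phi * a2 - sin phi * a1) / (cos phi * b2 - sin phi * b1)) ^+ 2 < tan e ^+ 2 ->
  False.
Proof.
move=> H0 H1 hmaps nU hphi hI he.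
set al := cos phi * a2 - sin phi * a1.
set be := cos phi * b2 - sin phi * b1.
move=> hb hx.
set x := - (al / be).
have hx' : x ^+ 2 < tan e ^+ 2 by rewrite /x sqrrN.
set s := atan x.
have hs := @atan_bound R e x he hx'.
apply: nU.
apply: (hmaps (t + s) (hI s hs)).
split => //.
set y1 := cos s * a1 + sin s * b1.
set y2 := cos s * a2 + sin s * b2.
have cs0 : cos s != 0.
  by rewrite /s cos_atan invr_eq0 gt_eqF // sqrtr_gt0; nra.
have ss : sin s = x * cos s by rewrite -[x](atanK) /tan divfK.
have cr : cos phi * y2 - sin phi * y1 = 0.
  have -> : cos phi * y2 - sin phi * y1 = cos s * (al + x * be).
    rewrite /y1 /y2 ss /al /be; clearbody x s; ring.
  by rewrite /x mulNr divfK // subrr mulr0.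
have hcs := @sc2 R phi.
exists (cos phi * y1 + sin phi * y2).
apply: cv2_eq.
- rewrite H0 !mxE /= -/y1.
  apply/eqP; rewrite -subr_eq0.
  have -> : y1 - (cos phi * y1 + sin phi * y2) * cos phi =
     y1 * (1 - (cos phi ^+ 2 + sin phi ^+2)) - sin phi * (cos phi * y2 - sin phi * y1) by ring.
  by rewrite cr hcs subrr !mulr0 subr0.
- rewrite H1 !mxE /= -/y2.
  apply/eqP; rewrite -subr_eq0.
  have -> : y2 - (cos phi * y1 + sin phi * y2) * sin phi =
     y2 * (1 - (cos phi ^+ 2 + sin phi ^+2)) + cos phi * (cos phi * y2 - sin phi * y1) by ring.
  by rewrite cr hcs subrr !mulr0 addr0.
Qed.

Theorem lemma3p3 (R : realType) (U : set R) :
  open U -> U `<` [set x : R | 0 < x < pi] ->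
  forall eps : R, 0 < eps ->
  exists M : R, 0 < M /\
    forall (A : 'M[R]_2) (t : R),
      \det A = 1 -> maps_into A U -> M < opnorm A -> is_tA A t ->
      ~ ([set x : R | t - eps < x < t + eps] `<=` U).
Proof.
move=> _ [Usub Unot] eps eps0.
have [p [hp nUp]] : exists p, (0 < p < pi) /\ ~ U p.
  apply: contrapT => H; apply: Unot => z hz; apply: contrapT => nUz.
  by apply: H; exists z.
have nU0 : ~ U 0 by move=> /Usub /= /andP[]; rewrite ltxx.
set e := Num.min eps (1/2).
have pih := pihalf_ge1 R.
have e0 : 0 < e by rewrite lt_min eps0 /=; lra.
have ele : e <= eps by rewrite ge_min lexx.
have e1 : e <= 1/2 by rewrite ge_min lexx orbT.
have he : 0 < e < pi / 2 by apply/andP; split => //; lra.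
set T := tan e.
have T0 : 0 < T.
  rewrite /T /tan divr_gt0 //; first by apply: sin_gt0_pihalf.
  by apply: cos_gt0_pihalf; apply/andP; split; lra.
set c := sin p.
have c0 : 0 < c by apply: sin_gt0_pi.
set K := 5 / (c^+2 * T^+2).
have K0 : 0 < K by rewrite /K divr_gt0 // mulr_gt0 // exprn_gt0.
exists (1 + K); split; first lra.
move=> A t hdet hmaps hM [_ htA] hsub.
have hI : forall s, -e < s < e -> U (t + s).
  move=> s /andP[s1 s2]; apply: hsub => /=; apply/andP; split; lra.
set sg := opnorm A in hM htA *.
set l := sg ^- 2 in htA *.
have sg0 : 0 < sg by lra.
have hl : l * sg^+2 = 1 by rewrite /l mulVf // expf_neq0 // gt_eqF.
have E0 : (A^T *m A *m ang t) 0 0 = (l *: ang t) 0 0 by rewrite htA.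
have E1 : (A^T *m A *m ang t) 1 0 = (l *: ang t) 1 0 by rewrite htA.
move: E0 E1; rewrite !mulE !mxE /= -/l => E0 E1.
move: hdet; rewrite det22 => hdet.
set C := cos t in E0 E1.
set S := sin t in E0 E1.
have hCS : C^+2 + S^+2 = 1 by apply: sc2.
set x := A 0 0 in E0 E1 hdet.
set y := A 0 1 in E0 E1 hdet.
set z := A 1 0 in E0 E1 hdet.
set w := A 1 1 in E0 E1 hdet.
set a1 := x * C + y * S.
set a2 := z * C + w * S.
set b1 := - x * S + y * C.
set b2 := - z * S + w * C.
have H0 : forall s, (A *m ang (t+s)) 0 0 = cos s * a1 + sin s * b1.
  by move=> s; rewrite mulE !mxE /= cosD sinD -/C -/S -/x -/y /a1 /b1; ring.
have H1 : forall s, (A *m ang (t+s)) 1 0 = cos s * a2 + sin s * b2.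
  by move=> s; rewrite mulE !mxE /= cosD sinD -/C -/S -/z -/w /a2 /b2; ring.
have F1 : a1^+2 + a2^+2 = l.
  have -> : a1^+2 + a2^+2 = C * ((x * x + z * z) * C + (x * y + z * w) * S)
     + S * ((y * x + w * z) * C + (y * y + w * w) * S) by rewrite /a1 /a2; ring.
  by rewrite E0 E1 -[RHS]mulr1 -hCS; ring.
have F2 : a1 * b1 + a2 * b2 = 0.
  have -> : a1 * b1 + a2 * b2 = - S * ((x * x + z * z) * C + (x * y + z * w) * S)
     + C * ((y * x + w * z) * C + (y * y + w * w) * S) by rewrite /a1 /a2 /b1 /b2; ring.
  by rewrite E0 E1; ring.
have F3 : a1 * b2 - a2 * b1 = 1.
  have -> : a1 * b2 - a2 * b1 = (x * w - y * z) * (C^+2 + S^+2) by rewrite /a1 /a2 /b1 /b2; ring.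
  by rewrite hdet hCS mulr1.
have F4 : b1^+2 + b2^+2 = sg^+2.
  have h1 : l * (b1^+2 + b2^+2) = 1.
    have -> : l * (b1^+2 + b2^+2) = (a1 * b1 + a2 * b2)^+2 + (a1 * b2 - a2 * b1)^+2 by rewrite -F1; ring.
    by rewrite F2 F3; ring.
  have ln0 : l != 0 by apply: contra_eq_neq hl => ->; rewrite mul0r eq_sym oner_neq0.
  by apply: (mulfI ln0); rewrite h1 hl.
clearbody a1 a2 b1 b2.
have cp := @sc2 R p.
have [phi [hphi [nUphi hbe]]] : exists phi, 0 <= phi < pi /\ ~ U phi /\
    c^+2 * sg^+2 <= 5 * (cos phi * b2 - sin phi * b1)^+2.
  have hcp : cos p ^+ 2 <= 1 by rewrite -cp; nra.
  set bp := cos p * b2 - sin p * b1.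
  have hb1 : c * b1 = cos p * b2 - bp by rewrite /bp /c; ring.
  have g1 : c^+2 * b1^+2 <= 2 * b2^+2 + 2 * bp^+2.
    have -> : c^+2 * b1^+2 = (cos p * b2 - bp)^+2 by rewrite -hb1; ring.
    have u2 : (cos p * b2)^+2 <= b2^+2.
      rewrite exprMn; have := sqr_ge0 b2; nra.
    have := sqr_ge0 (cos p * b2 + bp); nra.
  have g2 : c^+2 <= 1 by rewrite -cp /c; nra.
  have g3 : c^+2 * sg^+2 <= 3 * b2^+2 + 2 * bp^+2 by rewrite -F4; nra.
  case: (leP (bp^+2) (b2^+2)) => hcase.
  - exists 0; split; first by rewrite lexx pi_gt0.
    split => //. rewrite cos0 sin0; nra.
  - exists p; split; first by case/andP: hp => h1 h2; rewrite (ltW h1) h2.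
    split => //. rewrite -/c -/bp; nra.
set al := cos phi * a2 - sin phi * a1.
set be := cos phi * b2 - sin phi * b1 in hbe *.
have hphi2 := @sc2 R phi.
have hal : al^+2 <= l.
  have -> : l = al^+2 + (cos phi * a1 + sin phi * a2)^+2.
    by rewrite -F1 -[a1^+2 + a2^+2]mul1r -hphi2 /al; ring.
  by rewrite lerDl sqr_ge0.
have be0 : 0 < be^+2.
  have : 0 < c^+2 * sg^+2 by rewrite mulr_gt0 // exprn_gt0.
  lra.
have bne : be != 0 by apply: contraTneq be0 => ->; rewrite expr0n /= ltxx.
apply: (@final_step R U A t e phi a1 a2 b1 b2 H0 H1 hmaps nUphi hphi hI he bne).
rewrite -/al -/be expr_div_n ltr_pdivrMr //.
exact: (@bound_lemma R sg l c T K al be c0 T0 erefl hM hl hal hbe).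
Qed.
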